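(* Let $n\ge2$. (1) The set $X=\overline{(1+2^n)^{\mathbb{N}}}$ equals $1+2^n\mathbb{N}_0$ and $i(X)=2^{n-1}$. (2) The set $Y=\overline{(-1+2^n)^{\mathbb{N}}}$ equals $(1+2^{n+1}\mathbb{N}_0)\cup(2^n-1+2^{n+1}\mathbb{N}_0)$ and $i(Y)=2^{n-1}$.
   Context: $\mathbb{N}=\{1,2,\dots\}$, $\mathbb{N}_0=\{0\}\cup\mathbb{N}$, $x^{\mathbb{N}}=\{x^k:k\in\mathbb{N}\}$. Closures are taken in the $2$-adic topology on $\mathbb{N}\setminus2\mathbb{N}$ (generated by the sets $x+2^m\mathbb{N}_0$). $\mathbb{Z}_{2^m}^\times$ is the unit group of $\mathbb{Z}/2^m\mathbb{Z}$, $\pi_m:\mathbb{N}\to\mathbb{Z}/2^m\mathbb{Z}$, $x\mapsto x+2^m\mathbb{Z}$. For $X$ of the form $\overline{b^{\mathbb{N}}}$ with $b$ odd, $b\ne1$: $n(X)=\min\{m\in\mathbb{N}:X=\pi_m^{-1}(\pi_m(X)),\ |\pi_m(X)|\ge3\}$ and $i(X)$ is the index of $\pi_{n(X)}(X)$ in $\mathbb{Z}_{2^{n(X)}}^\times$. *)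

(* Defs.v *)
From HB Require Import structures.
From mathcomp Require Import all_boot all_algebra all_fingroup all_solvable.
From mathcomp Require Import boolp classical_sets.
Set Implicit Arguments. Unset Strict Implicit. Unset Printing Implicit Defensive.

Local Open Scope classical_set_scope.

Definition basic_open (z m : nat) : set nat :=
  [set y | (z <= y)%N /\ y = z %[mod 2 ^ m]].

(* Closure in the 2-adic topology on N \ 2N generated by the sets
   z + 2^m N_0 (z odd, m in N = {1,2,...}): x is in the closure of A iff
   every basic open set containing x meets A. *)
Definition adic_closure (A : set nat) : set nat :=
  [set x | odd x /\ forall z m, odd z -> (0 < m)%N -> basic_open z m x ->
             exists a, A a /\ basic_open z m a].

Definition powers (b : nat) : set nat := [set x | exists k, (0 < k)%N /\ x = b ^ k].

Definition pi_img (m : nat) (X : set nat) : {set 'Z_(2 ^ m)} :=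
  [set r : 'Z_(2 ^ m) | `[< exists x, X x /\ x %% 2 ^ m = nat_of_ord r >]].

Definition saturated (m : nat) (X : set nat) : Prop :=
  forall y, X y <-> exists x, X x /\ x = y %[mod 2 ^ m].

Definition n_good (X : set nat) (m : nat) : Prop :=
  (0 < m)%N /\ saturated m X /\ (3 <= #|pi_img m X|)%N.

Definition is_nX (X : set nat) (k : nat) : Prop :=
  n_good X k /\ forall m, n_good X m -> (k <= m)%N.

Definition unit_img (m : nat) (X : set nat) : {set {unit 'Z_(2 ^ m)}} :=
  [set u : {unit 'Z_(2 ^ m)} | val u \in pi_img m X].

Definition index_in_units (m : nat) (X : set nat) : nat :=
  #|(finset.setT : {set {unit 'Z_(2 ^ m)}}) : unit_img m X|%g.

(* Main.v *)
Require Import Defs.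
From mathcomp Require Import all_boot all_algebra all_fingroup all_solvable.
From mathcomp Require Import boolp classical_sets.
From mathcomp Require Import zify.
Set Implicit Arguments. Unset Strict Implicit.

Lemma sq_lift e u : 2 <= e -> odd u -> forall j, exists v, odd v /\
  (1 + 2^e*u)^(2^j) = 1 + 2^(e+j)*v.
Proof.
move=> he hu; elim=> [|j [v [hv IH]]]; first by exists u; rewrite addn0 expn1.
exists (v + 2^(e+j).-1 * v^2); split.
  rewrite oddD oddM oddX hv /=.
  have -> : ((e + j).-1 == 0) = false by apply/eqP; lia.
  by [].
rewrite (expnS 2 j) (mulnC 2 (2^j)) expnM IH.
have E : 2 ^ (e + j) = 2 * 2^(e+j).-1.
  rewrite -expnS; congr (2 ^ _); lia.
rewrite addnS expnS E; set N := 2 ^ (e + j).-1.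
rewrite !expnS expn0 !muln1. nia.
Qed.

Lemma modcase P r : 0 < P -> r < P*2 -> (r < P /\ r %% P = r) \/ (P <= r /\ r %% P = r - P).
Proof.
move=> hP hr; case: (ltnP r P) => h; first by left; rewrite modn_small.
right; split=> //. rewrite -{1}(subnK h) modnDr modn_small //; lia.
Qed.

Lemma mod2P y z P : 0 < P -> y = z %[mod P] ->
  y = z %[mod P * 2] \/ y + P = z %[mod P * 2].
Proof.
move=> hP hyz.
have hs : y %% (P*2) %% P = y %% P by rewrite modn_dvdm //; exact: dvdn_mulr.
have ht : z %% (P*2) %% P = z %% P by rewrite modn_dvdm //; exact: dvdn_mulr.
have hP2 : 0 < P * 2 by rewrite muln_gt0 hP.
have ls := ltn_pmod y hP2.
have lt := ltn_pmod z hP2.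
rewrite -modnDml.
move: hs ht ls lt hyz.
move: (y %% (P*2)) (z %% (P*2)) (y %% P) (z %% P) => s t yp zp hs ht ls lt hyz.
case: (modcase hP ls) => [[a1 a2]|[a1 a2]]; case: (modcase hP lt) => [[b1 b2]|[b1 b2]];
  rewrite a2 in hs; rewrite b2 in ht.
- by left; lia.
- right; rewrite modn_small; lia.
- right; have h2 : P*2 <= s + P by lia.
  rewrite -(subnK h2) modnDr modn_small; lia.
- by left; lia.
Qed.

Lemma modW d p a b : d %| p -> a = b %[mod p] -> a = b %[mod d].
Proof. by move=> hd h; rewrite -(modn_dvdm a hd) h modn_dvdm. Qed.

Lemma surj e u : 2 <= e -> odd u -> forall m x, x = 1 %[mod 2^e] ->
  exists k, (1+2^e*u)^k = x %[mod 2^m].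
Proof.
move=> he hu; elim=> [|m IH] x hx; first by exists 0; rewrite !modn1.
case: (leqP m.+1 e) => h.
  exists 0; rewrite expn0; apply: (modW (p := 2^e)); first by rewrite dvdn_exp2l.
  by rewrite hx.
have [k hk] := IH x hx.
have [v [hv hsq]] := sq_lift he hu (m - e).
have em : e + (m - e) = m by rewrite subnKC // -ltnS.
rewrite em in hsq.
have hP : 0 < 2^m by rewrite expn_gt0.
have hodd : odd ((1 + 2^e*u)^k).
  rewrite oddX oddD oddM oddX /=.
  have he0 : (e == 0) = false by move: he; case: (e).
  by rewrite he0 /= orbT.
rewrite expnSr.
case: (mod2P hP hk) => hk2; first by exists k.
exists (k + 2^(m-e)); rewrite expnD hsq.
move: hodd hk2; move: ((1 + 2^e*u)^k) => A hodd hk2.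
have hw := odd_double_half (A * v).
rewrite oddM hodd hv -muln2 in hw.
move: hw; move: ((A*v)./2) => w hw.
have -> : A * (1 + 2^m * v) = (A + 2^m) + w * (2^m*2).
  move: hw; move: (2^m) => Q hw; clear -hw; nia.
by rewrite addnC modnMDl.
Qed.

Lemma two_m_gt1 m : 0 < m -> 1 < 2^m.
Proof. case: m => // m _; rewrite expnS; have := expn_gt0 2 m; lia. Qed.

Lemma Zp_val m (r : 'Z_(2^m)) : 0 < m -> r < 2^m.
Proof.
move=> hm; have h2m := two_m_gt1 hm.
have := ltn_ord r; move: (nat_of_ord r) => k; by rewrite Zp_cast.
Qed.

Lemma odd_mod m a : 0 < m -> odd (a %% 2^m) = odd a.
Proof.
move=> hm; have h : 2 %| 2^m by rewrite -{1}(expn1 2) dvdn_exp2l.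
have := modn_dvdm a h; rewrite !modn2.
by case: (odd (a %% 2^m)); case: (odd a).
Qed.

Lemma index_gen m (X : set nat) : 0 < m -> X 1 ->
  (forall x y, X x -> X y -> X (x*y)) -> (forall x, X x -> odd x) ->
  #|pi_img m X| * index_in_units m X = 2^(m-1).
Proof.
move=> hm X1 XM Xodd.
have h2m := two_m_gt1 hm.
have gs : group_set (unit_img m X).
  apply/group_setP; split.
    rewrite inE FinRing.val_unit1 inE; apply/asboolP; exists 1; split=> //.
    have -> : nat_of_ord (1 : 'Z_(2^m))%R = 1 %% (Zp_trunc (2^m)).+2 by [].
    by rewrite Zp_cast.
  move=> x y; rewrite !inE FinRing.val_unitM.
  move=> [a [Xa ha]] [b [Xb hb]].
  exists (a*b); split; first exact: XM.
  have -> : nat_of_ord (FinRing.uval x * FinRing.uval y)%R =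
     (FinRing.uval x * FinRing.uval y) %% (Zp_trunc (2^m)).+2 by [].
  by rewrite -ha -hb Zp_cast // modnMm.
pose H := Group gs.
have L := Lagrange (finset.subsetT (gval H)).
have cardT : #|[set: {unit 'Z_(2^m)}]| = 2^(m-1).
  have := card_units_Zp (expn_gt0 2 m); rewrite /units_Zp => ->.
  by rewrite totient_pfactor // mul1n subn1.
have cardH : #|H| = #|pi_img m X|.
  have E : [set FinRing.uval u | u in unit_img m X] = pi_img m X.
  apply/eqP; rewrite finset.eqEsubset; apply/andP; split; apply/fintype.subsetP => r.
    by case/imsetP=> u; rewrite inE => hu ->.
  move=> hr; have := hr; rewrite inE => /asboolP [a [Xa ha]].
  have hu : r \is a GRing.unit.
    rewrite -[r]natr_Zp unitZpE // coprime_pexpl // coprime2n.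
    by rewrite -ha odd_mod // Xodd.
  apply/imsetP; exists (FinRing.Unit hu) => //; by rewrite inE.
  rewrite -E card_imset //; exact: val_inj.
rewrite -cardH /index_in_units.
by rewrite cardT in L.
Qed.

Lemma pow1 e u k : (1 + 2^e*u)^k = 1 %[mod 2^e].
Proof.
rewrite -modnXm.
have -> : (1 + 2^e*u) %% 2^e = 1 %% 2^e by rewrite addnC mulnC modnMDl.
by rewrite modnXm exp1n.
Qed.

Lemma bigpow e u : 2 <= e -> odd u -> forall m x, x = 1 %[mod 2^e] ->
  exists k, 0 < k /\ x <= (1+2^e*u)^k /\ (1+2^e*u)^k = x %[mod 2^m].
Proof.
move=> he hu m x hx.
have [k0 hk0] := surj he hu m hx.
have [v [_ hv]] := sq_lift he hu m.
set a := 1 + 2^e*u in hk0 hv *.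
have hP : 0 < 2^m by rewrite expn_gt0.
have ha1 : 1 < a.
  rewrite /a; have : 0 < 2^e*u by rewrite muln_gt0 expn_gt0 /=; case: (u) hu.
  by case: (2^e*u).
exists (k0 + x.+1 * 2^m); split; first by rewrite addn_gt0 muln_gt0 hP orbT.
split.
  apply: ltnW; apply: (@leq_trans (k0 + x.+1 * 2^m)); last exact: ltnW (ltn_expl _ ha1).
  apply: (@leq_trans (x.+1 * 2^m)); last exact: leq_addl.
  by rewrite -{1}(muln1 x.+1) leq_mul2l hP.
rewrite expnD (mulnC x.+1) expnM hv -modnMmr -modnXm.
have -> : (1 + 2 ^ (e + m) * v) %% 2^m = 1 %% 2^m.
  by rewrite expnD mulnAC addnC modnMDl.
by rewrite modnXm exp1n modnMmr muln1.
Qed.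

Lemma closure_crit (A S : set nat) m0 :
  0 < m0 ->
  (forall x, S x -> odd x) ->
  (forall a x, A a -> odd x -> a = x %[mod 2^m0] -> S x) ->
  (forall x, S x -> forall m, exists a, A a /\ x <= a /\ a = x %[mod 2^m]) ->
  adic_closure A = S.
Proof.
move=> hm0 Sodd SA AS; apply: funext => x; apply: propext; split.
  move=> [ox hx]; have [a [Aa [_ ha]]] := hx x m0 ox hm0 (conj (leqnn x) erefl).
  exact: (SA a x Aa ox).
move=> Sx; split; first exact: Sodd.
move=> z m oz hm [zx hxz].
have [a [Aa [xa ha]]] := AS x Sx m.
exists a; split=> //; split; first exact: leq_trans xa.
by rewrite ha.
Qed.

Lemma pi_eq m e (P : pred nat) : 0 < m -> e <= m ->
  pi_img m [set x | P (x %% 2^e)]%classic = [set r : 'Z_(2^m) | P (r %% 2^e)]%SET.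
Proof.
move=> hm hem; apply/finset.setP => r; rewrite !inE; apply/asboolP/idP.
  by move=> [x [Px hx]]; rewrite -hx modn_dvdm // dvdn_exp2l.
move=> h; exists (nat_of_ord r); split=> //.
by rewrite modn_small // Zp_val.
Qed.

Lemma sat_ok m e (P : pred nat) : e <= m -> saturated m [set x | P (x %% 2^e)]%classic.
Proof.
move=> hem y; split; first by move=> Py; exists y.
move=> [x [Px hxy]] /=.
by rewrite -(modW (dvdn_exp2l 2 hem) hxy).
Qed.

Lemma card_res q N c p : 0 < N -> c < N -> p = q * N ->
  #|[set r : 'I_p | r %% N == c]%SET| = q.
Proof.
move=> hN hc hp.
have lt : forall i : 'I_q, c + i * N < p.
  move=> i; rewrite hp; have := ltn_ord i; nia.
pose g i := Ordinal (lt i).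
have inj : injective g.
  move=> i j /(congr1 val) /= h; apply: val_inj => /=.
  by apply/eqP; rewrite -(eqn_pmul2r hN) -(eqn_add2l c) h.
have E : [set r : 'I_p | r %% N == c]%SET = (g @: [set: 'I_q])%SET.
  apply/eqP; rewrite finset.eqEsubset; apply/andP; split; apply/fintype.subsetP => r; rewrite inE.
    move/eqP=> hr; have hq : r %/ N < q by rewrite ltn_divLR // -hp.
    apply/imsetP; exists (Ordinal hq); first by rewrite inE.
    by apply: val_inj => /=; rewrite {1}(divn_eq r N) hr addnC.
  by case/imsetP=> i _ ->; rewrite /= addnC modnMDl modn_small.
by rewrite E card_imset // finset.cardsT card_ord.
Qed.

Lemma not_sat m (X : set nat) y : X 1 -> ~ X y -> y = 1 %[mod 2^m] -> ~ saturated m X.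
Proof.
move=> X1 nXy hy sat; apply: nXy; apply/(sat y); exists 1; split=> //.
Qed.

Lemma res_form c N x : c < N -> (exists k, x = c + N * k) <-> x %% N = c.
Proof.
move=> hc; split.
  by move=> [k ->]; rewrite addnC mulnC modnMDl modn_small.
move=> hx; exists (x %/ N); by rewrite {1}(divn_eq x N) hx addnC mulnC.
Qed.

Lemma nX_crit (X : set nat) (k : nat) : n_good X k ->
  (forall m, 0 < m -> m < k -> saturated m X -> #|pi_img m X| < 3) -> is_nX X k.
Proof.
move=> hk H; split=> // m [hm [sm cm]]; rewrite leqNgt; apply/negP => hmk.
by have := H m hm hmk sm; rewrite ltnNge cm.
Qed.

Lemma index_fin (X : set nat) (m c : nat) : #|pi_img m X| = 4 -> 0 < m -> X 1 ->
  (forall x y, X x -> X y -> X (x*y)) -> (forall x, X x -> odd x) ->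
  m = c.+3 -> index_in_units m X = (2 ^ c)%N.
Proof.
move=> hc hm X1 XM Xo hmc; have := index_gen hm X1 XM Xo.
rewrite hc hmc subSS subn0 expnS expnS mulnA => /eqP.
by rewrite eqn_mul2l /= => /eqP.
Qed.

Definition P1 (r : nat) : bool := r == 1.
Definition S1 n : set nat := [set x | P1 (x %% 2^n)]%classic.

Lemma two_n_gt1 n : 2 <= n -> 1 < 2^n.
Proof. by move=> h; apply: two_m_gt1; case: (n) h. Qed.

Lemma S1_closure n : 2 <= n -> adic_closure (powers (1 + 2^n)) = S1 n.
Proof.
move=> hn; have h1 := two_n_gt1 hn.
have hn0 : 0 < n by case: (n) hn.
apply: (closure_crit (m0 := n)) => //.
- move=> x; rewrite /S1 /= /P1 => /eqP hx.
  by rewrite -(odd_mod x hn0) hx.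
- move=> a x [k [_ ->]] _ ha; rewrite /S1 /= /P1 -ha.
  by have := pow1 n 1 k; rewrite muln1 => ->; rewrite modn_small.
- move=> x; rewrite /S1 /= /P1 => /eqP hx m.
  have hx' : x = 1 %[mod 2^n] by rewrite hx modn_small.
  have [k [hk [xk ak]]] := bigpow hn (isT : odd 1) m hx'.
  exists ((1 + 2^n*1)^k); split=> //; exists k; split=> //; by rewrite muln1.
Qed.

Lemma S1_mul n : 2 <= n -> forall x y, S1 n x -> S1 n y -> S1 n (x*y).
Proof.
move=> hn x y; rewrite /S1 /= /P1 => /eqP hx /eqP hy.
by rewrite -modnMm hx hy modn_small // two_n_gt1.
Qed.

Lemma S1_odd n : 2 <= n -> forall x, S1 n x -> odd x.
Proof.
move=> hn x; rewrite /S1 /= /P1 => /eqP hx.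
by rewrite -(odd_mod x (_ : 0 < n)) ?hx //; case: (n) hn.
Qed.

Lemma S1_card n m q : 2 <= n -> n <= m -> 2^m = q * 2^n -> #|pi_img m (S1 n)| = q.
Proof.
move=> hn hm hq.
have hm0 : 0 < m by apply: leq_trans hm; case: (n) hn.
rewrite /S1 pi_eq //; apply: card_res => //.
- by rewrite expn_gt0.
- exact: two_n_gt1.
- by rewrite Zp_cast // two_m_gt1.
Qed.

Lemma part1 n : 2 <= n ->
  (adic_closure (powers (1 + 2 ^ n)) = [set x | exists k, x = 1 + 2 ^ n * k]%classic
   /\ exists k, is_nX (adic_closure (powers (1 + 2 ^ n))) k /\
        index_in_units k (adic_closure (powers (1 + 2 ^ n))) = 2 ^ (n - 1)).
Proof.
move=> hn; rewrite S1_closure //; split.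
  apply: funext => x; apply: propext; rewrite /S1 /= /P1.
  have R := res_form x (two_n_gt1 hn).
  by split; [move/eqP/R | move/R => ->].
have c4 : #|pi_img n.+2 (S1 n)| = 4.
  by apply: S1_card => //; [lia | rewrite !expnS mulnA].
exists n.+2; split.
  apply: nX_crit.
    split=> //; split; first by apply: sat_ok; lia.
    by rewrite c4.
  move=> m hm0 hm sm.
  case: (ltnP m n) => hmn.
    exfalso; apply: (not_sat (y := 1 + 2^(n-1)) _ _ _ sm).
    - by rewrite /S1 /= /P1 modn_small // two_n_gt1.
    - rewrite /S1 /= /P1.
      have e : 2^n = 2 * 2^(n-1) by rewrite -expnS; congr (2 ^ _); lia.
      have hK0 : 1 < 2^(n-1) by apply: two_m_gt1; lia.
      rewrite e; move: hK0; move: (2^(n-1)) => K hK.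
      rewrite modn_small; last lia.
      move/eqP; lia.
    - apply: (modW (p := 2^(n-1))); first by rewrite dvdn_exp2l //; lia.
      by rewrite addnC -{1}(mul1n (2^(n-1))) modnMDl.
  rewrite (S1_card (q := 2^(m-n))) //; last by rewrite -expnD subnK.
  have : m - n <= 1 by lia.
  by case: (m-n) => [|[|]].
apply: index_fin => //.
- by rewrite /S1 /= /P1 modn_small // two_n_gt1.
- exact: S1_mul.
- exact: S1_odd.
- lia.
Qed.

Lemma card_res2 q N c1 c2 p : 0 < N -> c1 < N -> c2 < N -> c1 != c2 -> p = q * N ->
  #|[set r : 'I_p | (r %% N == c1) || (r %% N == c2)]%SET| = 2 * q.
Proof.
move=> hN h1 h2 h12 hp.
have -> : [set r : 'I_p | (r %% N == c1) || (r %% N == c2)]%SET =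
   ([set r : 'I_p | r %% N == c1] :|: [set r : 'I_p | r %% N == c2])%SET.
  by apply/finset.setP => r; rewrite !inE.
rewrite cardsU (card_res hN h1 hp) (card_res hN h2 hp).
have -> : ([set r : 'I_p | r %% N == c1] :&: [set r : 'I_p | r %% N == c2])%SET = finset.set0.
  apply/finset.setP => r; rewrite !inE; apply/negbTE/andP => -[/eqP e1 /eqP e2].
  by move/eqP: h12; apply; rewrite -e1 -e2.
by rewrite cards0 subn0 mul2n addnn.
Qed.

Definition P2 n (r : nat) : bool := (r == 1) || (r == 2^n - 1).
Definition S2 n : set nat := [set x | P2 n (x %% 2^n.+1)]%classic.

Lemma b_facts n : 2 <= n ->
  [/\ (2^n - 1)^2 = 1 + 2^n.+1 * (2^(n-1) - 1), odd (2^(n-1) - 1),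
      odd (2^n - 1), 2^n - 1 < 2^n.+1 & 3 <= 2^n - 1].
Proof.
move=> hn.
have e1 : 2^n = 2 * 2^(n-1) by rewrite -expnS; congr (2 ^ _); lia.
have e2 : 2^(n-1) = 2 * 2^(n-2) by rewrite -expnS; congr (2 ^ _); lia.
have e3 : 2^n.+1 = 2 * 2^n by rewrite expnS.
rewrite e3 e1 e2; have := expn_gt0 2 (n-2); move: (2^(n-2)) => L hL.
have o1 : 2 * L - 1 = 1 + 2 * (L - 1) by lia.
have o2 : 2 * (2 * L) - 1 = 1 + 2 * (2 * L - 1) by lia.
split.
- nia.
- by rewrite o1 oddD oddM.
- by rewrite o2 oddD oddM.
- lia.
- lia.
Qed.

Lemma S2_closure n : 2 <= n -> adic_closure (powers (2^n - 1)) = S2 n.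
Proof.
move=> hn; have [hb2 hu hbo hbM hb3] := b_facts hn.
have hn1 : 2 <= n.+1 by lia.
set b := 2^n - 1 in hb2 hbo hbM hb3 *.
set u := 2^(n-1) - 1 in hb2 hu *.
set M := 2^n.+1 in hb2 hbM *.
have hM0 : 0 < n.+1 by [].
have hM1 : 1 < M by apply: two_m_gt1.
have pb : forall k, (b^2)^k %% M = 1.
  by move=> k; rewrite hb2 pow1 modn_small.
have hbk : forall k, b^k %% M = if odd k then b else 1.
  move=> k; rewrite -{1}(odd_double_half k) expnD -muln2 (mulnC _ 2) expnM -modnMmr pb muln1.
  by case: (odd k); rewrite ?expn1 ?expn0 modn_small.
apply: (closure_crit (m0 := n.+1)) => //.
- move=> x; rewrite /S2 /= /P2 -/b -/M => /orP [] /eqP hx.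
    by rewrite -(odd_mod x hM0) -/M hx.
  by rewrite -(odd_mod x hM0) -/M hx.
- move=> a x [k [_ ->]] _ ha; rewrite /S2 /= /P2 -/b -/M -ha.
  rewrite hbk; by case: (odd k); rewrite eqxx ?orbT.
- move=> x; rewrite /S2 /= /P2 -/b -/M => /orP [] /eqP hx m.
    have hx' : x = 1 %[mod 2^n.+1] by rewrite -/M hx modn_small.
    have [k [hk [xk ak]]] := bigpow hn1 hu m hx'.
    rewrite -/M -hb2 -expnM in xk ak.
    exists (b ^ (2 * k)); split=> //; exists (2 * k); split=> //; by rewrite muln_gt0.
  pose j := 2^m - 1.
  pose x' := (b^2)^j * b * x.
  have pb1 : b^2 %% M = 1 by have := pb 1; rewrite expn1.
  have hx' : x' %% M = 1 %% M.
    rewrite /x' -mulnA -modnMm pb mul1n modn_mod -modnMmr hx mulnn pb1.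
    by rewrite modn_small.
  have [k [hk [xk ak]]] := bigpow hn1 hu m hx'.
  rewrite -/M -hb2 in xk ak.
  have hj : b * x' = (b^2)^(2^m) * x.
    have -> : 2^m = j + 1 by rewrite /j subnK // expn_gt0.
    rewrite /x' expnD expn1; move: ((b^2)^j) => Y; rewrite -mulnn; nia.
  have [v [_ hv]] := sq_lift hn1 hu m.
  rewrite -/M -hb2 in hv.
  exists (b ^ (2 * k).+1); split.
    by exists (2 * k).+1.
  split.
    apply: (@leq_trans x'). 
      rewrite /x'; apply: leq_pmull; rewrite muln_gt0 !expn_gt0.
      by case: (b) hb3.
    rewrite expnS expnM; apply: (leq_trans xk); apply: leq_pmull.
    by case: (b) hb3.
  rewrite expnS expnM -modnMmr ak modnMmr hj -modnMml hv.
  have -> : (1 + 2 ^ (n.+1 + m) * v) %% 2^m = 1 %% 2^m.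
    by rewrite expnD mulnAC addnC modnMDl.
  by rewrite modnMml mul1n.
Qed.

Lemma S2_mul n : 2 <= n -> forall x y, S2 n x -> S2 n y -> S2 n (x*y).
Proof.
move=> hn x y; have [hb2 hu hbo hbM hb3] := b_facts hn.
have hM1 : 1 < 2^n.+1 by apply: two_m_gt1.
have pb1 : (2^n - 1) * (2^n - 1) %% 2^n.+1 = 1.
  by rewrite mulnn hb2 addnC mulnC modnMDl modn_small.
rewrite /S2 /= /P2 -modnMm => /orP [] /eqP -> /orP [] /eqP ->;
  rewrite ?mul1n ?muln1 ?pb1 ?modn_small ?eqxx ?orbT //.
Qed.

Lemma S2_odd n : 2 <= n -> forall x, S2 n x -> odd x.
Proof.
move=> hn x; have [hb2 hu hbo hbM hb3] := b_facts hn.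
rewrite /S2 /= /P2 -(odd_mod x (_ : 0 < n.+1)) // => /orP [] /eqP -> //.
Qed.

Lemma S2_card n m q : 2 <= n -> n.+1 <= m -> 2^m = q * 2^n.+1 ->
  #|pi_img m (S2 n)| = 2 * q.
Proof.
move=> hn hm hq; have [hb2 hu hbo hbM hb3] := b_facts hn.
have hm0 : 0 < m by apply: leq_trans hm.
rewrite /S2 pi_eq //; apply: card_res2 => //.
- by rewrite expn_gt0.
- exact: two_m_gt1.
- by rewrite neq_ltn; apply/orP; left; apply: leq_trans hb3.
- by rewrite Zp_cast // two_m_gt1.
Qed.

Lemma part2 n : 2 <= n ->
  (adic_closure (powers (2 ^ n - 1)) =
     [set x | exists k, x = 1 + 2 ^ n.+1 * k \/ x = 2 ^ n - 1 + 2 ^ n.+1 * k]%classic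
   /\ exists k, is_nX (adic_closure (powers (2 ^ n - 1))) k /\
        index_in_units k (adic_closure (powers (2 ^ n - 1))) = 2 ^ (n - 1)).
Proof.
move=> hn; have [hb2 hu hbo hbM hb3] := b_facts hn.
have hM1 : 1 < 2^n.+1 by apply: two_m_gt1.
rewrite S2_closure //; split.
  apply: funext => x; apply: propext; rewrite /S2 /= /P2.
  have R1 := res_form x hM1.
  have R2 := res_form x hbM.
  split.
    case/orP => /eqP h.
      by have [k hk] := (proj2 R1) h; exists k; left.
    by have [k hk] := (proj2 R2) h; exists k; right.
  move=> [k [hk|hk]]; apply/orP.
    by left; apply/eqP; apply/R1; exists k.
  by right; apply/eqP; apply/R2; exists k.
have c4 : #|pi_img n.+2 (S2 n)| = 4.
  by rewrite (S2_card (q := 2)) //; rewrite (expnS 2 n.+1).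
exists n.+2; split.
  apply: nX_crit.
    split=> //; split; first by apply: sat_ok.
    by rewrite c4.
  move=> m hm0 hm sm.
  case: (ltnP n m) => hmn; last first.
    exfalso; apply: (not_sat (y := 1 + 2^n) _ _ _ sm).
    - by rewrite /S2 /= /P2 modn_small.
    - rewrite /S2 /= /P2.
      have e : 2^n.+1 = 2 * 2^n by rewrite expnS.
      have hK0 : 1 < 2^n by apply: two_m_gt1; lia.
      rewrite e; move: hK0; move: (2^n) => K hK.
      rewrite modn_small; last lia.
      move/orP => [] /eqP; lia.
    - apply: (modW (p := 2^n)); first by rewrite dvdn_exp2l.
      by rewrite addnC -{1}(mul1n (2^n)) modnMDl.
  have -> : m = n.+1 by lia.
  by rewrite (S2_card (q := 1)) // mul1n.
apply: index_fin => //.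
- by rewrite /S2 /= /P2 modn_small.
- exact: S2_mul.
- exact: S2_odd.
- lia.
Qed.

Local Open Scope classical_set_scope.

Theorem lemma4p7 (n : nat) : (2 <= n)%N ->
  (adic_closure (powers (1 + 2 ^ n)) = [set x | exists k, x = 1 + 2 ^ n * k]
   /\ exists k, is_nX (adic_closure (powers (1 + 2 ^ n))) k /\
        index_in_units k (adic_closure (powers (1 + 2 ^ n))) = 2 ^ (n - 1))
  /\
  (adic_closure (powers (2 ^ n - 1)) =
     [set x | exists k, x = 1 + 2 ^ n.+1 * k \/ x = 2 ^ n - 1 + 2 ^ n.+1 * k]
   /\ exists k, is_nX (adic_closure (powers (2 ^ n - 1))) k /\
        index_in_units k (adic_closure (powers (2 ^ n - 1))) = 2 ^ (n - 1)).
Proof.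
move=> hn; split; [exact: part1 | exact: part2].
Qed.
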